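(* Let $\mathcal{Q}\subseteq\Delta_{N\times M}$ be a nonempty compact convex set. Then strong duality holds between the problem $$\text{(P)}\quad \max_{p,\lambda\in\mathbb{R}^N,\ V\in\mathbb{R}^{N\times M}} \ \sum_{n=1}^N \lambda_n - \delta^\ast(V\mid\mathcal{Q})\ \ \text{s.t.}\ \sum_{n=1}^N p_n \exp\!\left(\frac{\lambda_n - V_{nm}}{p_n}\right) \le 1\ \forall m,\ p\ge 0,\ \sum_n p_n=1,$$ and the problem $$\text{(D)}\quad \min_{v\in\mathbb{R}^M,\ Q\in\mathcal{Q}} \ \log\sum_{m=1}^M \exp(v_m) + \max_{n=1,\dots,N}\left\{\sum_{m=1}^M Q_{nm}\left(\log Q_{nm}-v_m\right)\right\},$$ i.e. the optimal values of (P) and (D) coincide. Consequently, the robust capacity $\sup_{p\in\Delta_N}\inf_{Q\in\mathcal{Q}}I(p,Q)$ equals the optimal value of (D).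
   Context: $\Delta_N$ is the probability simplex in $\mathbb{R}^N$; $\Delta_{N\times M}$ is the set of $N\times M$ nonnegative matrices with each row summing to $1$. $I(p,Q)=\sum_{n,m}p_nQ_{nm}\log\frac{Q_{nm}}{\sum_l p_lQ_{lm}}$ (terms with $p_nQ_{nm}=0$ are zero). $\delta^\ast(V\mid\mathcal{Q})=\sup_{Q\in\mathcal{Q}}\sum_{n,m}V_{nm}Q_{nm}$. Convention $0\log 0=0$. The term $p_n\exp((\lambda_n-V_{nm})/p_n)$ at $p_n=0$ equals $0$ if $\lambda_n\le V_{nm}$ and $+\infty$ otherwise. *)

(* Defs.v *)
From Stdlib Require Import Reals Lra.
Open Scope R_scope.

(* vectors in R^N : nat -> R (only indices < N matter);
   matrices in R^{N x M} : nat -> nat -> R (only indices n<N, m<M matter) *)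

Fixpoint sumN (n : nat) (f : nat -> R) : R :=
  match n with O => 0 | S k => sumN k f + f k end.

Fixpoint maxUpTo (n : nat) (f : nat -> R) : R :=
  match n with O => f O | S k => Rmax (maxUpTo k f) (f (S k)) end.

(* max_{k < N} f k, for N >= 1 *)
Definition maxN (N : nat) (f : nat -> R) : R := maxUpTo (N - 1) f.

Definition in_simplex (N : nat) (p : nat -> R) : Prop :=
  (forall n, (n < N)%nat -> 0 <= p n) /\ sumN N p = 1.

Definition in_simplex_mat (N M : nat) (Q : nat -> nat -> R) : Prop :=
  forall n, (n < N)%nat -> in_simplex M (Q n).

Definition convex_set (Qs : (nat -> nat -> R) -> Prop) : Prop :=
  forall Q1 Q2 t, Qs Q1 -> Qs Q2 -> 0 <= t <= 1 ->
    Qs (fun n m => t * Q1 n m + (1 - t) * Q2 n m).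

(* compactness in R^{N x M} = sequential compactness w.r.t. the entries
   (n,m) with n<N, m<M *)
Definition compact_set (N M : nat) (Qs : (nat -> nat -> R) -> Prop) : Prop :=
  forall u : nat -> (nat -> nat -> R), (forall k, Qs (u k)) ->
    exists (phi : nat -> nat) (Qlim : nat -> nat -> R),
      (forall k, (phi k < phi (S k))%nat) /\ Qs Qlim /\
      forall n m, (n < N)%nat -> (m < M)%nat ->
        Un_cv (fun k => u (phi k) n m) (Qlim n m).

Definition is_lower_bound (E : R -> Prop) (m : R) : Prop := forall x, E x -> m <= x.
Definition is_glb (E : R -> Prop) (m : R) : Prop :=
  is_lower_bound E m /\ forall b, is_lower_bound E b -> b <= m.

Definition frob (N M : nat) (V Q : nat -> nat -> R) : R :=
  sumN N (fun n => sumN M (fun m => V n m * Q n m)).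

(* delta^*(V | Qs) = s  (support function value, as a relation) *)
Definition is_support_value (N M : nat) (Qs : (nat -> nat -> R) -> Prop)
  (V : nat -> nat -> R) (s : R) : Prop :=
  is_lub (fun x => exists Q, Qs Q /\ x = frob N M V Q) s.

(* feasibility of (p, lambda, V) in (P):
   sum_n p_n exp((lambda_n - V_nm)/p_n) <= 1 for all m, where the term with
   p_n = 0 is 0 if lambda_n <= V_nm and +infinity otherwise. *)
Definition persp_term (p a : R) : R :=
  if Rlt_dec 0 p then p * exp (a / p) else 0.

Definition P_feasible (N M : nat) (p lam : nat -> R) (V : nat -> nat -> R) : Prop :=
  in_simplex N p /\
  forall m, (m < M)%nat ->
    (forall n, (n < N)%nat -> p n = 0 -> lam n <= V n m) /\
    sumN N (fun n => persp_term (p n) (lam n - V n m)) <= 1.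

Definition P_values (N M : nat) (Qs : (nat -> nat -> R) -> Prop) (x : R) : Prop :=
  exists (p lam : nat -> R) (V : nat -> nat -> R) (s : R),
    P_feasible N M p lam V /\ is_support_value N M Qs V s /\
    x = sumN N lam - s.

Definition xlnx (x : R) : R := if Req_EM_T x 0 then 0 else x * ln x.

Definition D_obj (N M : nat) (v : nat -> R) (Q : nat -> nat -> R) : R :=
  ln (sumN M (fun m => exp (v m))) +
  maxN N (fun n => sumN M (fun m => xlnx (Q n m) - Q n m * v m)).

Definition D_values (N M : nat) (Qs : (nat -> nat -> R) -> Prop) (x : R) : Prop :=
  exists (v : nat -> R) (Q : nat -> nat -> R), Qs Q /\ x = D_obj N M v Q.

Definition mutual_info (N M : nat) (p : nat -> R) (Q : nat -> nat -> R) : R :=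
  sumN N (fun n => sumN M (fun m =>
    if Req_EM_T (p n * Q n m) 0 then 0
    else p n * Q n m * ln (Q n m / sumN N (fun l => p l * Q l m)))).

Definition cap_values (N M : nat) (Qs : (nat -> nat -> R) -> Prop) (x : R) : Prop :=
  exists p, in_simplex N p /\
    is_glb (fun y => exists Q, Qs Q /\ y = mutual_info N M p Q) x.

(* Main.v *)
Require Import Defs.
From Stdlib Require Import Reals Lra Lia Classical ClassicalEpsilon FunctionalExtensionality.
Import Defs.
Open Scope R_scope.

Lemma sumN_ext n f g : (forall i, (i < n)%nat -> f i = g i) -> sumN n f = sumN n g.
Proof. induction n; simpl; intros H; [reflexivity|]. rewrite IHn by (intros; apply H; lia). rewrite H by lia. reflexivity. Qed.

Lemma sumN_le n f g : (forall i, (i < n)%nat -> f i <= g i) -> sumN n f <= sumN n g.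
Proof. induction n; simpl; intros H; [lra|]. assert (H1 := H n ltac:(lia)). assert (sumN n f <= sumN n g) by (apply IHn; intros; apply H; lia). lra. Qed.

Lemma sumN_plus n f g : sumN n (fun i => f i + g i) = sumN n f + sumN n g.
Proof. induction n; simpl; [lra|]. rewrite IHn. lra. Qed.

Lemma sumN_minus n f g : sumN n (fun i => f i - g i) = sumN n f - sumN n g.
Proof. induction n; simpl; [lra|]. rewrite IHn. lra. Qed.

Lemma sumN_scal n c f : sumN n (fun i => c * f i) = c * sumN n f.
Proof. induction n; simpl; [lra|]. rewrite IHn. lra. Qed.

Lemma sumN_scal_r n c f : sumN n (fun i => f i * c) = sumN n f * c.
Proof. induction n; simpl; [lra|]. rewrite IHn. lra. Qed.

Lemma sumN_const n c : sumN n (fun _ => c) = INR n * c.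
Proof. induction n; simpl sumN; [simpl; lra|]. rewrite IHn, S_INR. lra. Qed.

Lemma sumN_zero n : sumN n (fun _ => 0) = 0.
Proof. rewrite sumN_const. lra. Qed.

Lemma sumN_swap a b (f : nat -> nat -> R) :
  sumN a (fun i => sumN b (fun j => f i j)) = sumN b (fun j => sumN a (fun i => f i j)).
Proof.
  induction a; simpl.
  - rewrite sumN_zero. reflexivity.
  - rewrite IHa, <- sumN_plus. reflexivity.
Qed.

Lemma sumN_nonneg n f : (forall i, (i < n)%nat -> 0 <= f i) -> 0 <= sumN n f.
Proof. intros H. rewrite <- (sumN_zero n). apply sumN_le. auto. Qed.

Lemma sumN_pos n f : (1 <= n)%nat -> (forall i, (i < n)%nat -> 0 < f i) -> 0 < sumN n f.
Proof.
  destruct n; [lia|]. intros _ H. simpl.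
  assert (0 <= sumN n f) by (apply sumN_nonneg; intros; left; apply H; lia).
  assert (0 < f n) by (apply H; lia). lra.
Qed.

Lemma sumN_ge_term n f i : (forall j, (j < n)%nat -> 0 <= f j) -> (i < n)%nat -> f i <= sumN n f.
Proof.
  induction n; intros H Hi; [lia|]. simpl.
  destruct (Nat.eq_dec i n).
  - subst. assert (0 <= sumN n f) by (apply sumN_nonneg; intros; apply H; lia). lra.
  - assert (f i <= sumN n f) by (apply IHn; [intros; apply H; lia| lia]).
    assert (0 <= f n) by (apply H; lia). lra.
Qed.

Lemma sumN_abs n f : Rabs (sumN n f) <= sumN n (fun i => Rabs (f i)).
Proof.
  induction n; simpl. { rewrite Rabs_R0; lra. }
  eapply Rle_trans; [apply Rabs_triang|]. lra.
Qed.

Lemma sumN_eq0 n f : (forall i, (i < n)%nat -> f i = 0) -> sumN n f = 0.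
Proof. intros H. rewrite <- (sumN_zero n). apply sumN_ext. auto. Qed.

Lemma maxUpTo_ge n f k : (k <= n)%nat -> f k <= maxUpTo n f.
Proof.
  induction n; intros Hk; simpl.
  - replace k with 0%nat by lia. lra.
  - destruct (Nat.eq_dec k (S n)). subst. apply Rmax_r.
    eapply Rle_trans; [apply IHn; lia| apply Rmax_l].
Qed.

Lemma maxUpTo_att n f : exists k, (k <= n)%nat /\ maxUpTo n f = f k.
Proof.
  induction n; simpl. exists 0%nat; split; auto.
  destruct IHn as [k [Hk E]]. rewrite E.
  destruct (Rle_dec (f k) (f (S n))).
  - exists (S n). split; [lia|]. apply Rmax_right; auto.
  - exists k. split; [lia|]. apply Rmax_left; lra.
Qed.

Lemma maxN_ge N f k : (k < N)%nat -> f k <= maxN N f.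
Proof. intros. unfold maxN. apply maxUpTo_ge. lia. Qed.

Lemma maxN_att N f : (1 <= N)%nat -> exists k, (k < N)%nat /\ maxN N f = f k.
Proof. intros. unfold maxN. destruct (maxUpTo_att (N-1) f) as [k [Hk E]]. exists k. split; auto; lia. Qed.

Lemma maxN_convex N f p : in_simplex N p -> sumN N (fun n => p n * f n) <= maxN N f.
Proof.
  intros [Hp Hs]. apply Rle_trans with (sumN N (fun n => p n * maxN N f)).
  - apply sumN_le. intros i Hi. apply Rmult_le_compat_l; auto. apply maxN_ge; auto.
  - rewrite sumN_scal_r, Hs. lra.
Qed.

Lemma ln_le_sub1 y : 0 < y -> ln y <= y - 1.
Proof. intros Hy. pose proof (exp_ineq1_le (ln y)). rewrite exp_ln in H; lra. Qed.

Lemma gibbs_pt x r : 0 <= x -> 0 < r -> x - r <= x * (ln x - ln r).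
Proof.
  intros Hx Hr. destruct (Req_dec x 0). subst. lra.
  assert (0 < x) by lra.
  pose proof (ln_le_sub1 (r / x) ltac:(apply Rdiv_lt_0_compat; lra)).
  unfold Rdiv in H1. rewrite ln_mult, ln_Rinv in H1 by (auto; apply Rinv_0_lt_compat; lra).
  apply Rmult_le_compat_l with (r := x) in H1; [|lra].
  replace (x * (r * / x - 1)) with (r - x) in H1 by (field; lra). lra.
Qed.

Lemma exp_neg_bound x : 0 <= x -> exp (- x) <= 1 - x + x * x.
Proof.
  intros Hx.
  assert (E : exp x = exp (x/2) * exp (x/2)) by (rewrite <- exp_plus; f_equal; lra).
  pose proof (exp_ineq1_le (x/2)).
  assert (exp x >= (1 + x/2) * (1 + x/2)) by (rewrite E; nra).
  assert (exp (-x) * exp x = 1) by (rewrite <- exp_plus; replace (-x+x) with 0 by lra; apply exp_0).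
  pose proof (exp_pos (-x)).
  assert ((1 - x + x*x) * ((1 + x/2) * (1 + x/2)) >= 1) by nra.
  nra.
Qed.

Lemma xlnx_pos x : 0 < x -> xlnx x = x * ln x.
Proof. intros. unfold xlnx. destruct (Req_EM_T x 0); [lra|auto]. Qed.

Lemma xlnx_0 : xlnx 0 = 0.
Proof. unfold xlnx. destruct (Req_EM_T 0 0); [auto|lra]. Qed.

Lemma xlnx_le0 x : 0 <= x <= 1 -> xlnx x <= 0.
Proof.
  intros H. destruct (Req_dec x 0). subst; rewrite xlnx_0; lra.
  rewrite xlnx_pos by lra.
  assert (ln x <= 0). { destruct (Req_dec x 1). subst; rewrite ln_1; lra.
    left. rewrite <- ln_1. apply ln_increasing; lra. }
  nra.
Qed.

Lemma ln_le x y : 0 < x -> x <= y -> ln x <= ln y.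
Proof. intros. destruct (Req_dec x y). subst; lra. left; apply ln_increasing; lra. Qed.

(* Jensen for exp, tangent line trick *)
Lemma jensen_exp T (a y : nat -> R) :
  (1 <= T)%nat -> (forall t, (t < T)%nat -> 0 < a t) ->
  sumN T a * exp (sumN T (fun t => a t * y t) / sumN T a) <= sumN T (fun t => a t * exp (y t)).
Proof.
  intros HT Ha. set (S := sumN T a). assert (HS : 0 < S) by (apply sumN_pos; auto).
  set (x0 := sumN T (fun t => a t * y t) / S).
  apply Rle_trans with (sumN T (fun t => a t * (exp x0 * (1 + (y t - x0))))).
  - replace (sumN T (fun t => a t * (exp x0 * (1 + (y t - x0)))))
      with (exp x0 * (S + (sumN T (fun t => a t * y t) - x0 * S))).
    + unfold x0. right. field. lra.
    + rewrite (sumN_ext T (fun t => a t * (exp x0 * (1 + (y t - x0)))) (fun t => exp x0 * (a t + (a t * y t - x0 * a t)))) by (intros; ring).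
      rewrite sumN_scal, sumN_plus, sumN_minus, sumN_scal. reflexivity.
  - apply sumN_le. intros t Ht. apply Rmult_le_compat_l. left; auto.
    pose proof (exp_ineq1_le (y t - x0)).
    replace (exp (y t)) with (exp x0 * exp (y t - x0)) by (rewrite <- exp_plus; f_equal; ring).
    apply Rmult_le_compat_l; [left; apply exp_pos| lra].
Qed.

Lemma jensen_ln T (a r : nat -> R) :
  (forall t, (t < T)%nat -> 0 <= a t) -> sumN T a = 1 -> (forall t, (t < T)%nat -> 0 < r t) ->
  sumN T (fun t => a t * ln (r t)) <= ln (sumN T (fun t => a t * r t)).
Proof.
  intros Ha Hs Hr. set (x0 := sumN T (fun t => a t * r t)).
  assert (Hx0 : 0 < x0).
  { destruct (Rle_dec x0 0); [|lra]. exfalso.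
    assert (forall t, (t < T)%nat -> a t * r t = 0).
    { intros t Ht. assert (0 <= a t * r t) by (apply Rmult_le_pos; auto; left; auto).
      destruct H; auto. exfalso.
      assert (a t * r t <= x0) by (apply (sumN_ge_term T (fun t => a t * r t)); auto;
        intros; apply Rmult_le_pos; auto; left; auto). lra. }
    assert (forall t, (t < T)%nat -> a t = 0).
    { intros t Ht. specialize (H t Ht). apply Rmult_integral in H. destruct H; auto.
      specialize (Hr t Ht); lra. }
    rewrite (sumN_eq0 T a H0) in Hs. lra. }
  apply Rle_trans with (sumN T (fun t => a t * (ln x0 + (r t - x0) / x0))).
  - apply sumN_le. intros t Ht. apply Rmult_le_compat_l; auto.
    pose proof (ln_le_sub1 (r t / x0) ltac:(apply Rdiv_lt_0_compat; auto)).
    unfold Rdiv in *. rewrite ln_mult, ln_Rinv in H by (auto; apply Rinv_0_lt_compat; lra).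
    replace ((r t - x0) * / x0) with (r t * / x0 - 1) by (field; lra). lra.
  - right. replace (sumN T (fun t => a t * (ln x0 + (r t - x0) / x0)))
      with (sumN T a * ln x0 + (x0 - x0 * sumN T a) / x0).
    + rewrite Hs. field. lra.
    + rewrite (sumN_ext T (fun t => a t * (ln x0 + (r t - x0) / x0)) (fun t => a t * ln x0 + (a t * r t - x0 * a t) * / x0)) by (intros; field; lra).
      rewrite sumN_plus, sumN_scal_r, sumN_scal_r, sumN_minus, sumN_scal. fold x0. reflexivity.
Qed.

Definition wts (k : nat) (g : R) (L : nat -> R) (j : nat) : R :=
  exp (- g * L j) / sumN k (fun i => exp (- g * L i)).

Fixpoint cumL (k : nat) (g : R) (F : (nat -> R) -> (nat -> R)) (t : nat) : nat -> R :=
  match t with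
  | O => fun _ => 0
  | S t => fun i => cumL k g F t i + F (wts k g (cumL k g F t)) i
  end.

Lemma wts_pos k g L j : (1 <= k)%nat -> 0 < wts k g L j.
Proof. intros. unfold wts. apply Rdiv_lt_0_compat. apply exp_pos. apply sumN_pos; auto. intros; apply exp_pos. Qed.

Lemma wts_sum k g L : (1 <= k)%nat -> sumN k (wts k g L) = 1.
Proof.
  intros Hk. unfold wts. unfold Rdiv. rewrite sumN_scal_r. field.
  apply Rgt_not_eq. apply sumN_pos; auto. intros; apply exp_pos.
Qed.

Lemma cumL_sum k g F T i : cumL k g F T i = sumN T (fun t => F (wts k g (cumL k g F t)) i).
Proof. induction T; simpl; auto. rewrite IHT. reflexivity. Qed.

Lemma hedge k g B F :
  (1 <= k)%nat -> 0 < g -> 0 <= B ->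
  (forall w, (forall j, (j < k)%nat -> 0 < w j) -> sumN k w = 1 ->
     forall i, (i < k)%nat -> 0 <= F w i <= B) ->
  forall T i, (i < k)%nat ->
  sumN T (fun t => sumN k (fun j => wts k g (cumL k g F t) j * F (wts k g (cumL k g F t)) j))
  <= cumL k g F T i + ln (INR k) / g + INR T * g * (B * B).
Proof.
  intros Hk Hg HB HF T i Hi.
  set (Phi := fun t => sumN k (fun j => exp (- g * cumL k g F t j))).
  set (G := fun t => sumN k (fun j => wts k g (cumL k g F t) j * F (wts k g (cumL k g F t)) j)).
  assert (Hstep : forall t, Phi (S t) <= Phi t * exp (- g * G t + g * g * (B * B))).
  { intros t. set (W := wts k g (cumL k g F t)). set (l := F W).
    assert (HW : forall j, (j < k)%nat -> 0 < W j) by (intros; apply wts_pos; auto).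
    assert (HWs : sumN k W = 1) by (apply wts_sum; auto).
    assert (Hl : forall j, (j < k)%nat -> 0 <= l j <= B) by (intros; apply HF; auto).
    assert (HPhi : 0 < Phi t) by (apply sumN_pos; auto; intros; apply exp_pos).
    assert (E1 : Phi (S t) = Phi t * sumN k (fun j => W j * exp (- g * l j))).
    { unfold Phi. simpl. rewrite <- sumN_scal. apply sumN_ext. intros j Hj.
      unfold l, W, wts.
      rewrite Rmult_plus_distr_l, exp_plus. field. apply Rgt_not_eq.
      apply sumN_pos; auto. intros; apply exp_pos. }
    rewrite E1. apply Rmult_le_compat_l; [lra|].
    apply Rle_trans with (sumN k (fun j => W j * (1 - g * l j + (g * l j) * (g * l j)))).
    { apply sumN_le. intros j Hj. apply Rmult_le_compat_l. left; auto.
      replace (- g * l j) with (- (g * l j)) by ring. apply exp_neg_bound.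
      specialize (Hl j Hj). nra. }
    apply Rle_trans with (1 - g * G t + g * g * (B * B)).
    { apply Rle_trans with (sumN k (fun j => W j * 1 - g * (W j * l j) + g * g * (B * B) * W j)).
      - apply sumN_le. intros j Hj. specialize (Hl j Hj). specialize (HW j Hj).
        assert (l j * l j <= B * B) by nra.
        assert (g * g * (l j * l j) <= g * g * (B * B)) by (apply Rmult_le_compat_l; nra).
        assert (W j * (g * g * (l j * l j)) <= W j * (g * g * (B * B))) by (apply Rmult_le_compat_l; lra).
        nra.
      - right. rewrite sumN_plus, sumN_minus, sumN_scal, sumN_scal.
        rewrite (sumN_ext k (fun j => W j * 1) W) by (intros; ring). rewrite HWs.
        unfold G. fold W. fold l. ring. }
    pose proof (exp_ineq1_le (- g * G t + g * g * (B * B))). lra. }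
  assert (Hind : forall T, Phi T <= INR k * exp (- g * sumN T G + INR T * (g * g * (B * B)))).
  { induction T0.
    - simpl. unfold Phi. simpl. rewrite (sumN_ext k _ (fun _ => 1)).
      + rewrite sumN_const. replace (- g * 0 + 0 * (g * g * (B * B))) with 0 by ring. rewrite exp_0. lra.
      + intros. replace (- g * 0) with 0 by ring. apply exp_0.
    - eapply Rle_trans; [apply Hstep|].
      eapply Rle_trans. apply Rmult_le_compat_r. left; apply exp_pos. apply IHT0.
      rewrite Rmult_assoc, <- exp_plus. right. f_equal. f_equal. simpl sumN. rewrite S_INR. ring. }
  specialize (Hind T).
  assert (exp (- g * cumL k g F T i) <= Phi T).
  { unfold Phi. apply (sumN_ge_term k (fun j => exp (- g * cumL k g F T j))); auto.
    intros; left; apply exp_pos. }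
  assert (Hkpos : 0 < INR k) by (apply lt_0_INR; lia).
  assert (H1 : exp (- g * cumL k g F T i) <= exp (ln (INR k) + (- g * sumN T G + INR T * (g * g * (B * B))))).
  { rewrite exp_plus, exp_ln by auto. lra. }
  assert (H2 : - g * cumL k g F T i <= ln (INR k) + (- g * sumN T G + INR T * (g * g * (B * B)))).
  { destruct (Rle_dec (- g * cumL k g F T i) (ln (INR k) + (- g * sumN T G + INR T * (g * g * (B * B))))); auto.
    exfalso. assert (exp (ln (INR k) + (- g * sumN T G + INR T * (g * g * (B * B)))) < exp (- g * cumL k g F T i)) by (apply exp_increasing; lra). lra. }
  fold G.
  assert (g * sumN T G <= g * (cumL k g F T i + ln (INR k) / g + INR T * g * (B * B))).
  { replace (g * (cumL k g F T i + ln (INR k) / g + INR T * g * (B * B))) with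
      (g * cumL k g F T i + ln (INR k) + INR T * (g * g * (B * B))) by (field; lra). lra. }
  apply Rmult_le_reg_l with g; auto.
Qed.

Definition Iterm (p Q q : R) : R := if Req_EM_T (p * Q) 0 then 0 else p * Q * ln (Q / q).

Lemma entryA p Q q a : 0 <= p -> 0 <= Q -> p * Q <= q -> (p = 0 -> a <= 0) ->
  p * Q - q * persp_term p a <= Iterm p Q q + Q * (- a).
Proof.
  intros Hp HQ Hq Ha. unfold Iterm, persp_term.
  destruct (Rlt_dec 0 p) as [Hp'|Hp'].
  - destruct (Req_EM_T (p * Q) 0) as [E|E].
    + assert (Q = 0). { apply Rmult_integral in E. destruct E; lra. }
      subst. assert (0 <= q * (p * exp (a / p))).
      { apply Rmult_le_pos. lra. apply Rmult_le_pos. lra. left; apply exp_pos. }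
      lra.
    + assert (HQ' : 0 < Q) by (destruct HQ; auto; subst; lra).
      assert (Hq' : 0 < q) by (assert (0 < p * Q) by (apply Rmult_lt_0_compat; auto); lra).
      set (y := q * exp (a / p) / Q).
      assert (Hy : 0 < y) by (unfold y; apply Rdiv_lt_0_compat; auto; apply Rmult_lt_0_compat; auto; apply exp_pos).
      pose proof (ln_le_sub1 y Hy).
      assert (Ey : ln y = ln q + a / p - ln Q).
      { unfold y, Rdiv.
        assert (0 < q * exp (a * / p)) by (apply Rmult_lt_0_compat; auto; apply exp_pos).
        assert (0 < / Q) by (apply Rinv_0_lt_compat; auto).
        rewrite (ln_mult _ _ H0 H1), (ln_mult _ _ Hq' (exp_pos _)), ln_exp, ln_Rinv by auto. ring. }
      assert (EQ : ln (Q / q) = ln Q - ln q).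
      { unfold Rdiv. rewrite ln_mult, ln_Rinv; auto. apply Rinv_0_lt_compat; auto. }
      rewrite EQ.
      assert (Hpq : 0 < p * Q) by (apply Rmult_lt_0_compat; auto).
      assert (p * Q * (1 - y) <= p * Q * (- ln y)) by (apply Rmult_le_compat_l; lra).
      rewrite Ey in H0.
      assert (E2 : p * Q * y = q * (p * exp (a / p))) by (unfold y; field; lra).
      replace (p * Q * (- (ln q + a / p - ln Q))) with (p * Q * (ln Q - ln q) + Q * - a) in H0 by (field; lra).
      lra.
  - assert (p = 0) by lra. subst. rewrite Rmult_0_l.
    destruct (Req_EM_T 0 0); [|lra]. specialize (Ha eq_refl). nra.
Qed.

Lemma mi_eq N M (p : nat -> R) (Q : nat -> nat -> R) : mutual_info N M p Q =
  sumN N (fun n => sumN M (fun m => Iterm (p n) (Q n m) (sumN N (fun l => p l * Q l m)))).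
Proof. reflexivity. Qed.

Lemma row_sum_lam N M (lam : nat -> R) (Q : nat -> nat -> R) : in_simplex_mat N M Q ->
  sumN N lam = sumN N (fun n => sumN M (fun m => lam n * Q n m)).
Proof.
  intros H. apply sumN_ext. intros n Hn. rewrite sumN_scal. destruct (H n Hn) as [_ Hs]. rewrite Hs. ring.
Qed.

Lemma q_ge N (p : nat -> R) (Q : nat -> nat -> R) n m : (forall l, (l < N)%nat -> 0 <= p l /\ 0 <= Q l m) -> (n < N)%nat ->
  p n * Q n m <= sumN N (fun l => p l * Q l m).
Proof.
  intros H Hn. apply (sumN_ge_term N (fun l => p l * Q l m)); auto.
  intros j Hj. destruct (H j Hj). apply Rmult_le_pos; auto.
Qed.

Lemma col_sum N M (p : nat -> R) (Q : nat -> nat -> R) : in_simplex N p -> in_simplex_mat N M Q ->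
  sumN M (fun m => sumN N (fun l => p l * Q l m)) = 1.
Proof.
  intros [Hp Hs] HQ. rewrite <- sumN_swap. rewrite <- Hs. apply sumN_ext. intros n Hn.
  rewrite sumN_scal. destruct (HQ n Hn) as [_ H]. rewrite H. ring.
Qed.

Lemma dsum_plus A B (f g : nat -> nat -> R) :
  sumN A (fun n => sumN B (fun m => f n m + g n m)) =
  sumN A (fun n => sumN B (fun m => f n m)) + sumN A (fun n => sumN B (fun m => g n m)).
Proof. rewrite <- sumN_plus. apply sumN_ext. intros. apply sumN_plus. Qed.

Lemma dsum_minus A B (f g : nat -> nat -> R) :
  sumN A (fun n => sumN B (fun m => f n m - g n m)) =
  sumN A (fun n => sumN B (fun m => f n m)) - sumN A (fun n => sumN B (fun m => g n m)).
Proof. rewrite <- sumN_minus. apply sumN_ext. intros. apply sumN_minus. Qed.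

Lemma dsum_le A B (f g : nat -> nat -> R) :
  (forall n m, (n < A)%nat -> (m < B)%nat -> f n m <= g n m) ->
  sumN A (fun n => sumN B (fun m => f n m)) <= sumN A (fun n => sumN B (fun m => g n m)).
Proof. intros H. apply sumN_le. intros. apply sumN_le. intros. auto. Qed.

Lemma dsum_ext A B (f g : nat -> nat -> R) :
  (forall n m, (n < A)%nat -> (m < B)%nat -> f n m = g n m) ->
  sumN A (fun n => sumN B (fun m => f n m)) = sumN A (fun n => sumN B (fun m => g n m)).
Proof. intros H. apply sumN_ext. intros. apply sumN_ext. intros. auto. Qed.

Lemma partA N M p lam V Q : P_feasible N M p lam V -> in_simplex_mat N M Q ->
  sumN N lam - frob N M V Q <= mutual_info N M p Q.
Proof.
  intros [[Hp Hps] HF] HQ.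
  set (q := fun m => sumN N (fun l => p l * Q l m)).
  assert (Hq0 : forall m, (m < M)%nat -> 0 <= q m).
  { intros m Hm. apply sumN_nonneg. intros l Hl. apply Rmult_le_pos; auto.
    destruct (HQ l Hl) as [H _]. apply H; auto. }
  assert (Key : 0 <= sumN N (fun n => sumN M (fun m => Iterm (p n) (Q n m) (q m) + Q n m * (- (lam n - V n m))))).
  { eapply Rle_trans; [|apply dsum_le with (f := fun n m => p n * Q n m - q m * persp_term (p n) (lam n - V n m))].
    - rewrite sumN_swap.
      rewrite (sumN_ext M (fun m => sumN N (fun n => p n * Q n m - q m * persp_term (p n) (lam n - V n m))) (fun m => q m * (1 - sumN N (fun n => persp_term (p n) (lam n - V n m))))).
      + apply sumN_nonneg. intros m Hm. apply Rmult_le_pos; auto. destruct (HF m Hm) as [_ H]. lra.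
      + intros m Hm. rewrite sumN_minus, sumN_scal. fold (q m). ring.
    - intros n m Hn Hm. apply entryA.
      + apply Hp; auto.
      + destruct (HQ n Hn) as [H _]. apply H; auto.
      + apply q_ge; auto. intros l Hl. split. apply Hp; auto. destruct (HQ l Hl) as [H _]. apply H; auto.
      + intros E. destruct (HF m Hm) as [H _]. specialize (H n Hn E). lra. }
  rewrite (dsum_ext N M (fun n m => Iterm (p n) (Q n m) (q m) + Q n m * (- (lam n - V n m))) (fun n m => Iterm (p n) (Q n m) (q m) + V n m * Q n m - lam n * Q n m)) in Key
    by (intros; ring).
  rewrite dsum_minus, dsum_plus in Key. rewrite (row_sum_lam N M lam Q HQ). unfold frob.
  rewrite mi_eq. unfold q in Key. lra.
Qed.

Lemma entryW p Q q v lZ : 0 <= p -> 0 <= Q -> p * Q <= q ->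
  Iterm p Q q + p * Q * (ln q - (v - lZ)) = p * (xlnx Q - Q * v) + p * Q * lZ.
Proof.
  intros Hp HQ Hq. unfold Iterm. destruct (Req_EM_T (p * Q) 0) as [E|E].
  - rewrite E. apply Rmult_integral in E. destruct E as [E|E]; subst.
    + ring.
    + rewrite xlnx_0. ring.
  - assert (HQ' : 0 < Q) by (destruct HQ; auto; subst; exfalso; apply E; ring).
    assert (Hp' : 0 < p) by (destruct Hp; auto; subst; exfalso; apply E; ring).
    assert (Hq' : 0 < q) by (assert (0 < p * Q) by (apply Rmult_lt_0_compat; auto); lra).
    rewrite xlnx_pos by auto. unfold Rdiv. rewrite ln_mult, ln_Rinv; auto.
    ring. apply Rinv_0_lt_compat; auto.
Qed.

Lemma W2 N M p Q v : (1 <= M)%nat -> in_simplex N p -> in_simplex_mat N M Q ->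
  mutual_info N M p Q <= D_obj N M v Q.
Proof.
  intros HM Hp HQ. destruct Hp as [Hp0 Hps].
  set (Z := sumN M (fun m => exp (v m))).
  assert (HZ : 0 < Z) by (apply sumN_pos; auto; intros; apply exp_pos).
  set (q := fun m => sumN N (fun l => p l * Q l m)).
  set (r := fun m => exp (v m - ln Z)).
  assert (Hr : forall m, 0 < r m) by (intros; apply exp_pos).
  assert (Hrs : sumN M r = 1).
  { unfold r. rewrite (sumN_ext M (fun m => exp (v m - ln Z)) (fun m => exp (v m) * / Z)).
    - rewrite sumN_scal_r. fold Z. field; lra.
    - intros m Hm. unfold Rminus. rewrite exp_plus, exp_Ropp, exp_ln; auto. }
  assert (Hqs : sumN M q = 1) by (apply col_sum; [split; auto | exact HQ]).
  assert (Hq0 : forall m, (m < M)%nat -> 0 <= q m).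
  { intros m Hm. apply sumN_nonneg. intros l Hl. apply Rmult_le_pos; auto.
    destruct (HQ l Hl) as [H _]. apply H; auto. }
  set (g := fun n => sumN M (fun m => xlnx (Q n m) - Q n m * v m)).
  assert (H1 : ln Z + sumN N (fun n => p n * g n) <= D_obj N M v Q).
  { unfold D_obj. fold Z. fold g. apply Rplus_le_compat_l. apply maxN_convex. split; auto. }
  assert (H2 : ln Z + sumN N (fun n => p n * g n) =
     sumN N (fun n => sumN M (fun m => p n * (xlnx (Q n m) - Q n m * v m) + p n * Q n m * ln Z))).
  { rewrite dsum_plus. unfold g.
    rewrite (sumN_ext N (fun n => p n * sumN M (fun m => xlnx (Q n m) - Q n m * v m))
       (fun n => sumN M (fun m => p n * (xlnx (Q n m) - Q n m * v m)))) by (intros; rewrite sumN_scal; auto).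
    rewrite (sumN_ext N (fun n => sumN M (fun m => p n * Q n m * ln Z)) (fun n => p n * ln Z)).
    - rewrite sumN_scal_r, Hps. ring.
    - intros n Hn. rewrite (sumN_ext M _ (fun m => (p n * ln Z) * Q n m)) by (intros; ring).
      rewrite sumN_scal. destruct (HQ n Hn) as [_ Hs]. rewrite Hs. ring. }
  assert (H3 : sumN N (fun n => sumN M (fun m => p n * (xlnx (Q n m) - Q n m * v m) + p n * Q n m * ln Z)) =
     mutual_info N M p Q + sumN M (fun m => q m * (ln (q m) - (v m - ln Z)))).
  { rewrite <- (dsum_ext N M (fun n m => Iterm (p n) (Q n m) (q m) + p n * Q n m * (ln (q m) - (v m - ln Z)))).
    - rewrite dsum_plus. rewrite mi_eq. f_equal. rewrite sumN_swap. apply sumN_ext. intros m Hm.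
      rewrite sumN_scal_r. reflexivity.
    - intros n m Hn Hm. apply entryW. apply Hp0; auto. destruct (HQ n Hn) as [H _]; apply H; auto.
      apply q_ge; auto. intros l Hl. split. apply Hp0; auto. destruct (HQ l Hl) as [H _]; apply H; auto. }
  assert (H4 : 0 <= sumN M (fun m => q m * (ln (q m) - (v m - ln Z)))).
  { apply Rle_trans with (sumN M (fun m => q m - r m)).
    - rewrite sumN_minus, Hqs, Hrs. lra.
    - apply sumN_le. intros m Hm. replace (v m - ln Z) with (ln (r m)) by (unfold r; rewrite ln_exp; auto).
      apply gibbs_pt; auto. }
  lra.
Qed.

Definition KB N M B (p : nat -> R) (V : nat -> nat -> R) : Prop :=
  (forall n, (n < N)%nat -> 0 < p n) /\ sumN N p = 1 /\
  (forall n m, (n < N)%nat -> (m < M)%nat -> Rabs (V n m) <= p n * B) /\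
  (forall m, (m < M)%nat -> sumN N (fun n => p n * exp (- V n m / p n)) <= 1).

Lemma KB_feasible N M B p V : KB N M B p V -> P_feasible N M p (fun _ => 0) V.
Proof.
  intros [Hp [Hs [Hb Hc]]]. split.
  - split; auto. intros; left; auto.
  - intros m Hm. split.
    + intros n Hn E. specialize (Hp n Hn). lra.
    + eapply Rle_trans; [|apply (Hc m Hm)]. right. apply sumN_ext. intros n Hn.
      unfold persp_term. destruct (Rlt_dec 0 (p n)). f_equal. f_equal. unfold Rdiv. ring.
      specialize (Hp n Hn). lra.
Qed.

Lemma KB_frob_bound N M B p V Q : KB N M B p V -> in_simplex_mat N M Q -> Rabs (frob N M V Q) <= B.
Proof.
  intros [Hp [Hs [Hb Hc]]] HQ. unfold frob.
  eapply Rle_trans; [apply sumN_abs|].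
  apply Rle_trans with (sumN N (fun n => p n * B)).
  - apply sumN_le. intros n Hn. eapply Rle_trans; [apply sumN_abs|].
    destruct (HQ n Hn) as [HQ0 HQs].
    apply Rle_trans with (sumN M (fun m => (p n * B) * Q n m)).
    + apply sumN_le. intros m Hm. rewrite Rabs_mult. rewrite (Rabs_right (Q n m)) by (apply Rle_ge; auto).
      apply Rmult_le_compat_r; auto.
    + rewrite sumN_scal, HQs. lra.
  - rewrite sumN_scal_r, Hs. lra.
Qed.

Lemma KB_frob_close N M B p V Q Q' d : KB N M B p V -> 0 <= B ->
  (forall n m, (n < N)%nat -> (m < M)%nat -> Rabs (Q n m - Q' n m) <= d) ->
  Rabs (frob N M V Q - frob N M V Q') <= B * INR M * d.
Proof.
  intros [Hp [Hs [Hb Hc]]] HB HQ. unfold frob. rewrite <- dsum_minus.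
  eapply Rle_trans; [apply sumN_abs|].
  apply Rle_trans with (sumN N (fun n => p n * (B * INR M * d))).
  - apply sumN_le. intros n Hn. eapply Rle_trans; [apply sumN_abs|].
    apply Rle_trans with (sumN M (fun m => p n * B * d)).
    + apply sumN_le. intros m Hm. replace (V n m * Q n m - V n m * Q' n m) with (V n m * (Q n m - Q' n m)) by ring.
      rewrite Rabs_mult. apply Rmult_le_compat; auto using Rabs_pos.
    + rewrite sumN_const. right; ring.
  - rewrite sumN_scal_r, Hs. lra.
Qed.

Definition avgp T (P : nat -> nat -> R) (n : nat) : R := sumN T (fun t => P t n) / INR T.
Definition avgV T (W : nat -> nat -> nat -> R) (n m : nat) : R := sumN T (fun t => W t n m) / INR T.

Lemma frob_avg N M T W Q : (1 <= T)%nat ->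
  frob N M (avgV T W) Q = sumN T (fun t => frob N M (W t) Q) / INR T.
Proof.
  intros HT. unfold frob, avgV, Rdiv.
  transitivity (sumN N (fun n => sumN M (fun m => sumN T (fun t => W t n m * Q n m * / INR T)))).
  - apply sumN_ext. intros n Hn. apply sumN_ext. intros m Hm.
    rewrite sumN_scal_r, sumN_scal_r. ring.
  - rewrite <- sumN_scal_r.
    transitivity (sumN N (fun n => sumN T (fun t => sumN M (fun m => W t n m * Q n m * / INR T)))).
    + apply sumN_ext. intros n Hn. apply sumN_swap.
    + rewrite <- sumN_swap. apply sumN_ext. intros t Ht. rewrite <- sumN_scal_r. apply sumN_ext.
      intros n Hn. rewrite <- sumN_scal_r. reflexivity.
Qed.

Lemma KB_avg N M B T P W : (1 <= T)%nat -> (forall t, (t < T)%nat -> KB N M B (P t) (W t)) ->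
  KB N M B (avgp T P) (avgV T W).
Proof.
  intros HT HK. assert (HTp : 0 < INR T) by (apply lt_0_INR; lia).
  unfold avgp, avgV. split; [|split; [|split]].
  - intros n Hn. apply Rdiv_lt_0_compat; auto. apply sumN_pos; auto. intros t Ht. destruct (HK t Ht) as [H _]; auto.
  - unfold Rdiv. rewrite sumN_scal_r, <- sumN_swap.
    rewrite (sumN_ext T _ (fun _ => 1)). rewrite sumN_const. field. lra.
    intros t Ht. destruct (HK t Ht) as [_ [H _]]; auto.
  - intros n m Hn Hm. unfold Rdiv. rewrite Rabs_mult, (Rabs_right (/ INR T)) by (apply Rle_ge; left; apply Rinv_0_lt_compat; auto).
    replace (sumN T (fun t => P t n) * / INR T * B) with (sumN T (fun t => P t n * B) * / INR T)
      by (rewrite sumN_scal_r; ring).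
    apply Rmult_le_compat_r; [left; apply Rinv_0_lt_compat; auto|].
    eapply Rle_trans; [apply sumN_abs|]. apply sumN_le. intros t Ht. destruct (HK t Ht) as [_ [_ [H _]]]; auto.
  - intros m Hm.
    apply Rle_trans with (sumN N (fun n => sumN T (fun t => P t n * exp (- W t n m / P t n)) / INR T)).
    + apply sumN_le. intros n Hn.
      pose proof (jensen_exp T (fun t => P t n) (fun t => - W t n m / P t n) HT) as J.
      assert (Hpos : forall t, (t < T)%nat -> 0 < P t n) by (intros t Ht; destruct (HK t Ht) as [H _]; auto).
      specialize (J Hpos).
cbv beta in J.
      rewrite (sumN_ext T (fun t => P t n * (- W t n m / P t n)) (fun t => - W t n m)) in J
        by (intros t Ht; specialize (Hpos t Ht); field; lra).
      assert (HS : 0 < sumN T (fun t => P t n)) by (apply sumN_pos; auto).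
      replace (- (sumN T (fun t => W t n m) / INR T) / (sumN T (fun t => P t n) / INR T))
        with (sumN T (fun t => - W t n m) / sumN T (fun t => P t n)).
      * set (X := exp (sumN T (fun t : nat => - W t n m) / sumN T (fun t : nat => P t n))) in *.
        set (S := sumN T (fun t : nat => P t n)) in *.
        set (Y := sumN T (fun t : nat => P t n * exp (- W t n m / P t n))) in *.
        unfold Rdiv. replace (S * / INR T * X) with (/ INR T * (S * X)) by ring.
        rewrite (Rmult_comm Y). apply Rmult_le_compat_l; [left; apply Rinv_0_lt_compat; auto|]. exact J.
      * rewrite (sumN_ext T (fun t => - W t n m) (fun t => -1 * W t n m)) by (intros; ring).
        rewrite sumN_scal. field. split; lra.
    + unfold Rdiv. rewrite sumN_scal_r, <- sumN_swap.
      apply Rle_trans with (sumN T (fun _ => 1) * / INR T).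
      * apply Rmult_le_compat_r; [left; apply Rinv_0_lt_compat; auto|]. apply sumN_le. intros t Ht.
        destruct (HK t Ht) as [_ [_ [_ H]]]. apply H; auto.
      * rewrite sumN_const. right; field; lra.
Qed.

Definition Qt M eta (Qb : nat -> nat -> R) n m := (1 - eta) * Qb n m + eta / INR M.
Definition rr N M eta Qb (p : nat -> R) m := sumN N (fun l => p l * Qt M eta Qb l m).
Definition tangV N M eta Qb (p : nat -> R) n m := - p n * ln (Qt M eta Qb n m / rr N M eta Qb p m).
Definition KLn M (Qb : nat -> nat -> R) (r : nat -> R) n :=
  sumN M (fun m => xlnx (Qb n m) - Qb n m * ln (r m)).

Definition psimplex N (p : nat -> R) := (forall n, (n < N)%nat -> 0 < p n) /\ sumN N p = 1.

Lemma ent_le1 N M (Q : nat -> nat -> R) n m : in_simplex_mat N M Q -> (n < N)%nat -> (m < M)%nat ->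
  0 <= Q n m <= 1.
Proof.
  intros HQ Hn Hm. destruct (HQ n Hn) as [H0 Hs]. split. apply H0; auto.
  rewrite <- Hs. apply (sumN_ge_term M (Q n)); auto.
Qed.

Section Tang.
Variables (N M : nat) (eta : R) (Qb : nat -> nat -> R).
Hypotheses (HM : (1 <= M)%nat) (Heta : 0 < eta < 1) (HQ : in_simplex_mat N M Qb).

Let e := eta / INR M.
Lemma e_pos : 0 < e.
Proof. unfold e. apply Rdiv_lt_0_compat. lra. apply lt_0_INR; lia. Qed.
Lemma e_le1 : e <= 1.
Proof. unfold e. assert (1 <= INR M) by (apply (le_INR 1); auto). unfold Rdiv.
  apply Rle_trans with (eta * / 1). apply Rmult_le_compat_l. lra. apply Rinv_le_contravar; lra. rewrite Rinv_1; lra. Qed.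

Lemma Qt_bounds n m : (n < N)%nat -> (m < M)%nat -> e <= Qt M eta Qb n m <= 1.
Proof.
  intros Hn Hm. unfold Qt. fold e. pose proof (ent_le1 N M Qb n m HQ Hn Hm). pose proof e_le1.
  split. nra. assert (e <= eta). { unfold e. unfold Rdiv.
    assert (1 <= INR M) by (apply (le_INR 1); auto).
    apply Rle_trans with (eta * / 1). apply Rmult_le_compat_l. lra. apply Rinv_le_contravar; lra. rewrite Rinv_1; lra. }
  nra.
Qed.

Lemma rr_bounds p m : psimplex N p -> (m < M)%nat -> e <= rr N M eta Qb p m <= 1.
Proof.
  intros [Hp Hs] Hm. unfold rr. split.
  - apply Rle_trans with (sumN N (fun l => p l * e)). rewrite sumN_scal_r, Hs; lra.
    apply sumN_le. intros l Hl. apply Rmult_le_compat_l. left; auto. apply Qt_bounds; auto.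
  - apply Rle_trans with (sumN N (fun l => p l * 1)). 2: rewrite sumN_scal_r, Hs; lra.
    apply sumN_le. intros l Hl. apply Rmult_le_compat_l. left; auto. apply Qt_bounds; auto.
Qed.

Lemma rr_sum p : psimplex N p -> sumN M (rr N M eta Qb p) = 1.
Proof.
  intros [Hp Hs]. unfold rr. rewrite <- sumN_swap. rewrite <- Hs. apply sumN_ext. intros n Hn.
  rewrite sumN_scal. unfold Qt. rewrite sumN_plus, sumN_scal, sumN_const.
  destruct (HQ n Hn) as [_ H]. rewrite H. field.
  apply Rgt_not_eq. apply lt_0_INR; lia.
Qed.

Lemma rr_simpl p m : psimplex N p ->
  rr N M eta Qb p m = (1 - eta) * sumN N (fun l => p l * Qb l m) + e.
Proof.
  intros [Hp Hs]. unfold rr, Qt. fold e.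
  rewrite (sumN_ext N _ (fun l => (1 - eta) * (p l * Qb l m) + e * p l)) by (intros; ring).
  rewrite sumN_plus, sumN_scal, sumN_scal, Hs. ring.
Qed.

Definition Bq := ln (INR M / eta).

Lemma Bq_e : ln e = - Bq.
Proof.
  unfold Bq, e. unfold Rdiv. rewrite <- ln_Rinv. f_equal. rewrite Rinv_mult, Rinv_inv. ring.
  apply Rmult_lt_0_compat. apply lt_0_INR; lia. apply Rinv_0_lt_compat; lra.
Qed.

Lemma Bq_pos : 0 < Bq.
Proof.
  unfold Bq. rewrite <- ln_1. apply ln_increasing; [lra|].
  assert (1 <= INR M) by (apply (le_INR 1); auto).
  apply Rmult_lt_reg_r with eta; [lra|]. unfold Rdiv. rewrite Rmult_assoc, Rinv_l by lra. lra.
Qed.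

Lemma ln_range x : e <= x <= 1 -> - Bq <= ln x <= 0.
Proof.
  intros H. pose proof e_pos. rewrite <- Bq_e. split. apply ln_le; lra.
  rewrite <- ln_1. apply ln_le; lra.
Qed.

Lemma tang_KB p : psimplex N p -> KB N M Bq p (tangV N M eta Qb p).
Proof.
  intros Hps. pose proof Hps as [Hp Hs]. split; [auto|split; [auto|split]].
  - intros n m Hn Hm. unfold tangV.
    pose proof (Qt_bounds n m Hn Hm). pose proof (rr_bounds p m Hps Hm). pose proof e_pos.
    unfold Rdiv. rewrite ln_mult, ln_Rinv by (try apply Rinv_0_lt_compat; lra).
    pose proof (ln_range _ H). pose proof (ln_range _ H0).
    rewrite Rabs_mult. rewrite Rabs_Ropp, (Rabs_right (p n)) by (apply Rle_ge; left; auto).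
    apply Rmult_le_compat_l. left; auto. unfold Rabs. destruct (Rcase_abs _); lra.
  - intros m Hm. pose proof (rr_bounds p m Hps Hm). pose proof e_pos.
    apply Rle_trans with (sumN N (fun n => p n * Qt M eta Qb n m) / rr N M eta Qb p m).
    + right. unfold Rdiv at 2. rewrite <- sumN_scal_r. apply sumN_ext. intros n Hn.
      pose proof (Qt_bounds n m Hn Hm). specialize (Hp n Hn).
      unfold tangV. replace (- (- p n * ln (Qt M eta Qb n m / rr N M eta Qb p m)) / p n)
        with (ln (Qt M eta Qb n m / rr N M eta Qb p m)) by (field; lra).
      rewrite exp_ln. unfold Rdiv; ring. apply Rdiv_lt_0_compat; lra.
    + fold (rr N M eta Qb p m). right. field. lra.
Qed.

Lemma gibbs_xlnx x r : 0 <= x -> 0 < r -> x - r <= xlnx x - x * ln r.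
Proof.
  intros Hx Hr. destruct (Req_dec x 0). subst. rewrite xlnx_0. lra.
  rewrite xlnx_pos by lra. pose proof (gibbs_pt x r Hx Hr). lra.
Qed.

Lemma KL_bounds p n : psimplex N p -> (n < N)%nat ->
  0 <= KLn M Qb (rr N M eta Qb p) n <= Bq.
Proof.
  intros Hps Hn. unfold KLn. split.
  - apply Rle_trans with (sumN M (fun m => Qb n m - rr N M eta Qb p m)).
    + rewrite sumN_minus, rr_sum by auto. destruct (HQ n Hn) as [_ H]. rewrite H. lra.
    + apply sumN_le. intros m Hm. apply gibbs_xlnx. apply (ent_le1 N M Qb n m HQ Hn Hm).
      pose proof (rr_bounds p m Hps Hm). pose proof e_pos. lra.
  - apply Rle_trans with (sumN M (fun m => Qb n m * Bq)).
    + apply sumN_le. intros m Hm. pose proof (ent_le1 N M Qb n m HQ Hn Hm).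
      pose proof (xlnx_le0 _ H). pose proof (ln_range _ (rr_bounds p m Hps Hm)). nra.
    + rewrite sumN_scal_r. destruct (HQ n Hn) as [_ H]. rewrite H. lra.
Qed.

Lemma tang_gap p : psimplex N p ->
  sumN N (fun j => p j * KLn M Qb (rr N M eta Qb p) j) + ln (1 - eta) <= - frob N M (tangV N M eta Qb p) Qb.
Proof.
  intros Hps. pose proof Hps as [Hp Hs].
  assert (E : sumN N (fun j => p j * KLn M Qb (rr N M eta Qb p) j) + frob N M (tangV N M eta Qb p) Qb =
     sumN N (fun n => sumN M (fun m => p n * (xlnx (Qb n m) - Qb n m * ln (Qt M eta Qb n m))))).
  { unfold frob, KLn. rewrite <- sumN_plus. apply sumN_ext. intros n Hn. rewrite <- sumN_scal, <- sumN_plus.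
    apply sumN_ext. intros m Hm. unfold tangV. pose proof (Qt_bounds n m Hn Hm). pose proof (rr_bounds p m Hps Hm).
    pose proof e_pos. unfold Rdiv. rewrite ln_mult, ln_Rinv by (try apply Rinv_0_lt_compat; lra). ring. }
  assert (Hle : sumN N (fun n => sumN M (fun m => p n * (xlnx (Qb n m) - Qb n m * ln (Qt M eta Qb n m))))
      <= - ln (1 - eta)).
  { apply Rle_trans with (sumN N (fun n => sumN M (fun m => p n * (Qb n m * - ln (1 - eta))))).
    - apply dsum_le. intros n m Hn Hm. apply Rmult_le_compat_l. left; auto.
      pose proof (ent_le1 N M Qb n m HQ Hn Hm). destruct (Req_dec (Qb n m) 0) as [E0|E0].
      + rewrite E0, xlnx_0. lra.
      + rewrite xlnx_pos by lra. pose proof e_pos.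
        assert (ln ((1 - eta) * Qb n m) <= ln (Qt M eta Qb n m)).
        { apply ln_le. apply Rmult_lt_0_compat; lra. unfold Qt. fold e. lra. }
        rewrite ln_mult in H1 by lra. nra.
    - right. rewrite (sumN_ext N _ (fun n => p n * - ln (1 - eta))). rewrite sumN_scal_r, Hs. ring.
      intros n Hn. rewrite (sumN_ext M (fun m => p n * (Qb n m * - ln (1 - eta))) (fun m => (p n * - ln (1 - eta)) * Qb n m)) by (intros; ring).
      rewrite sumN_scal. destruct (HQ n Hn) as [_ H]. rewrite H. ring. }
  lra.
Qed.

End Tang.

Lemma choose_gT a b eps : 0 <= a -> 0 < b -> 0 < eps ->
  exists g T, 0 < g /\ (1 <= T)%nat /\ a / (g * INR T) + g * b <= eps.
Proof.
  intros Ha Hb He. set (g := eps / (2 * b)).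
  assert (Hg : 0 < g) by (unfold g; apply Rdiv_lt_0_compat; lra).
  destruct (archimed_cor1 (eps / 2 / (a / g + 1))) as [T [HT HT0]].
  { apply Rdiv_lt_0_compat. lra. assert (0 <= a / g) by (apply Rmult_le_pos; auto; left; apply Rinv_0_lt_compat; auto). lra. }
  exists g, T. split; auto. split; [lia|].
  assert (HTp : 0 < INR T) by (apply lt_0_INR; lia).
  assert (E1 : g * b = eps / 2) by (unfold g; field; lra).
  assert (H0 : 0 <= a / g) by (apply Rmult_le_pos; auto; left; apply Rinv_0_lt_compat; auto).
  assert (E2 : a / (g * INR T) = a / g * / INR T) by (field; lra).
  rewrite E1, E2.
  assert (a / g * / INR T <= (a / g + 1) * / INR T) by (apply Rmult_le_compat_r; [left; apply Rinv_0_lt_compat; auto| lra]).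
  assert ((a / g + 1) * / INR T <= (a / g + 1) * (eps / 2 / (a / g + 1))) by (apply Rmult_le_compat_l; lra).
  replace ((a / g + 1) * (eps / 2 / (a / g + 1))) with (eps / 2) in H1 by (field; lra).
  lra.
Qed.

Lemma inner N M eta c eps Qb : (1 <= N)%nat -> (1 <= M)%nat -> 0 < eta < 1 -> 0 < eps ->
  in_simplex_mat N M Qb -> (forall v, c <= D_obj N M v Qb) ->
  exists p V, KB N M (Bq M eta) p V /\ c - eps + ln (1 - eta) <= - frob N M V Qb.
Proof.
  intros HN HM Heta Heps HQ Hc.
  set (B := Bq M eta).
  assert (HB : 0 < B) by (apply Bq_pos; auto).
  set (F := fun (w : nat -> R) n => B - KLn M Qb (rr N M eta Qb w) n).
  assert (HlnN : 0 <= ln (INR N)).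
  { rewrite <- ln_1. apply ln_le. lra. apply (le_INR 1); auto. }
  destruct (choose_gT (ln (INR N)) (B * B) eps HlnN ltac:(nra) Heps) as [g [T [Hg [HT Hchoice]]]].
  assert (HTp : 0 < INR T) by (apply lt_0_INR; lia).
  set (W := fun t => wts N g (cumL N g F t)).
  assert (HW : forall t, psimplex N (W t)).
  { intros t. split. intros; apply wts_pos; auto. apply wts_sum; auto. }
  assert (HFb : forall w, (forall j, (j < N)%nat -> 0 < w j) -> sumN N w = 1 ->
     forall i, (i < N)%nat -> 0 <= F w i <= B).
  { intros w Hw Hws i Hi. pose proof (KL_bounds N M eta Qb HM Heta HQ w i (conj Hw Hws) Hi). fold B in H. unfold F. lra. }
  pose proof (hedge N g B F HN Hg ltac:(lra) HFb T) as Hh.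
  set (KL := fun t n => KLn M Qb (rr N M eta Qb (W t)) n).
  set (G := sumN T (fun t => sumN N (fun j => W t j * KL t j))).
  assert (HG : forall n, (n < N)%nat -> sumN T (fun t => KL t n) - ln (INR N) / g - INR T * g * (B * B) <= G).
  { intros n Hn. specialize (Hh n Hn). rewrite cumL_sum in Hh.
change (sumN T (fun t => sumN N (fun j => W t j * F (W t) j)) <= sumN T (fun t => F (W t) n) + ln (INR N) / g + INR T * g * (B * B)) in Hh.
        rewrite (sumN_ext T (fun t => sumN N (fun j => W t j * F (W t) j)) (fun t => B - sumN N (fun j => W t j * KL t j))) in Hh.
    - rewrite (sumN_ext T (fun t => F (W t) n) (fun t => B - KL t n)) in Hh by (intros; reflexivity).
      rewrite !sumN_minus in Hh. unfold G. lra.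
    - intros t Ht. unfold F. rewrite (sumN_ext N _ (fun j => B * W t j - W t j * KL t j)) by (intros; unfold KL; ring).
      rewrite sumN_minus, sumN_scal. destruct (HW t) as [_ Hs]. rewrite Hs. ring. }
  set (rb := fun m => sumN T (fun t => rr N M eta Qb (W t) m) / INR T).
  assert (Hrb : forall m, (m < M)%nat ->
     sumN T (fun t => / INR T * ln (rr N M eta Qb (W t) m)) <= ln (rb m)).
  { intros m Hm. unfold rb. unfold Rdiv. rewrite Rmult_comm, <- sumN_scal.
    apply jensen_ln.
    - intros; left; apply Rinv_0_lt_compat; auto.
    - rewrite sumN_const. field. lra.
    - intros t Ht. pose proof (rr_bounds N M eta Qb HM Heta HQ (W t) m (HW t) Hm).
      assert (0 < eta / INR M) by (apply Rdiv_lt_0_compat; [lra| apply lt_0_INR; lia]). lra. }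
  assert (Hrbs : sumN M rb = 1).
  { unfold rb, Rdiv. rewrite sumN_scal_r. rewrite <- sumN_swap.
    rewrite (sumN_ext T _ (fun _ => 1)). rewrite sumN_const. field; lra.
    intros t Ht. apply rr_sum; auto. }
  assert (Hrbp : forall m, (m < M)%nat -> 0 < rb m).
  { intros m Hm. unfold rb. apply Rdiv_lt_0_compat; auto. apply sumN_pos; auto. intros t Ht.
    pose proof (rr_bounds N M eta Qb HM Heta HQ (W t) m (HW t) Hm).
    assert (0 < eta / INR M) by (apply Rdiv_lt_0_compat; [lra| apply lt_0_INR; lia]). lra. }
  set (v := fun m => ln (rb m)).
  specialize (Hc v). unfold D_obj in Hc.
  rewrite (sumN_ext M (fun m => exp (v m)) rb) in Hc by (intros m Hm; unfold v; apply exp_ln; auto).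
  rewrite Hrbs, ln_1, Rplus_0_l in Hc.
  destruct (maxN_att N (fun n => sumN M (fun m => xlnx (Qb n m) - Qb n m * v m)) HN) as [ns [Hns Ens]].
  rewrite Ens in Hc.
  assert (Hc2 : c * INR T <= sumN T (fun t => KL t ns)).
  { apply Rle_trans with (INR T * sumN M (fun m => xlnx (Qb ns m) - Qb ns m * v m)).
    { rewrite Rmult_comm. apply Rmult_le_compat_l; lra. }
    unfold KL, KLn. rewrite sumN_swap. rewrite <- sumN_scal. apply sumN_le. intros m Hm.
    rewrite sumN_minus, sumN_const.
    rewrite (sumN_ext T (fun t => Qb ns m * ln (rr N M eta Qb (W t) m)) (fun t => (Qb ns m * INR T) * (/ INR T * ln (rr N M eta Qb (W t) m)))) by (intros; field; lra).
    rewrite sumN_scal. specialize (Hrb m Hm). fold (v m) in Hrb.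
    assert (0 <= Qb ns m * INR T) by (apply Rmult_le_pos; [apply (ent_le1 N M Qb ns m HQ Hns Hm)| lra]).
    assert (Qb ns m * INR T * sumN T (fun t => / INR T * ln (rr N M eta Qb (W t) m)) <= Qb ns m * INR T * v m)
      by (apply Rmult_le_compat_l; auto).
    lra. }
  specialize (HG ns Hns).
  set (Vt := fun t => tangV N M eta Qb (W t)).
  assert (Hgap : G + INR T * ln (1 - eta) <= sumN T (fun t => - frob N M (Vt t) Qb)).
  { unfold G. rewrite <- sumN_const, <- sumN_plus. apply sumN_le. intros t Ht.
    apply (tang_gap N M eta Qb HM Heta HQ (W t) (HW t)). }
  exists (avgp T W), (avgV T Vt). split.
  - apply KB_avg; auto. intros t Ht. apply tang_KB; auto.
  - rewrite frob_avg by auto.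
    rewrite (sumN_ext T (fun t => - frob N M (Vt t) Qb) (fun t => -1 * frob N M (Vt t) Qb)) in Hgap by (intros; ring).
    rewrite sumN_scal in Hgap.
    assert (Hsum : INR T * (c - eps + ln (1 - eta)) <= - sumN T (fun t => frob N M (Vt t) Qb)).
    { assert (ln (INR N) / g + INR T * g * (B * B) <= INR T * eps).
      { replace (ln (INR N) / g + INR T * g * (B * B)) with (INR T * (ln (INR N) / (g * INR T) + g * (B * B))) by (field; lra).
        apply Rmult_le_compat_l; lra. }
      lra. }
    apply Rmult_le_reg_l with (INR T); auto.
    replace (INR T * - (sumN T (fun t => frob N M (Vt t) Qb) / INR T)) with (- sumN T (fun t => frob N M (Vt t) Qb)) by (field; lra).
    exact Hsum.
Qed.

Definition closeM N M d (Q Q' : nat -> nat -> R) :=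
  forall n m, (n < N)%nat -> (m < M)%nat -> Rabs (Q n m - Q' n m) <= d.

Lemma unifK A (P : nat -> nat -> Prop) :
  (forall a, (a < A)%nat -> exists K, forall k, (K <= k)%nat -> P a k) ->
  exists K, forall k, (K <= k)%nat -> forall a, (a < A)%nat -> P a k.
Proof.
  induction A; intros H.
  - exists 0%nat. intros. lia.
  - destruct IHA as [K1 HK1]. { intros a Ha. apply H. lia. }
    destruct (H A ltac:(lia)) as [K2 HK2].
    exists (K1 + K2)%nat. intros k Hk a Ha. destruct (Nat.eq_dec a A).
    + subst. apply HK2. lia.
    + apply HK1. lia. lia.
Qed.

Section Net.
Variables (N M : nat) (Qs : (nat -> nat -> R) -> Prop) (d : R) (Q0 : nat -> nat -> R).
Hypotheses (Hd : 0 < d) (HQ0 : Qs Q0) (Hcomp : compact_set N M Qs).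

Definition pick (j : nat) (f : nat -> nat -> nat -> R) : nat -> nat -> R :=
  epsilon (inhabits Q0) (fun Q => Qs Q /\ forall i, (i < j)%nat -> ~ closeM N M d Q (f i)).

Fixpoint seqU (j : nat) : nat -> nat -> nat -> R :=
  match j with
  | O => fun _ => Q0
  | S j' => fun i => if Nat.ltb i j' then seqU j' i else pick j' (seqU j')
  end.

Definition useq j := pick j (seqU j).

Lemma seqU_eq j i : (i < j)%nat -> seqU j i = useq i.
Proof.
  induction j; intros Hi. lia. simpl. destruct (Nat.ltb i j) eqn:E.
  - apply Nat.ltb_lt in E. auto.
  - apply Nat.ltb_ge in E. assert (i = j) by lia. subst. reflexivity.
Qed.

Lemma net_exists :
  exists k (F : nat -> nat -> nat -> R), (forall i, (i < k)%nat -> Qs (F i)) /\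
    forall Q, Qs Q -> exists i, (i < k)%nat /\ closeM N M d Q (F i).
Proof.
  apply NNPP. intros Hneg.
  assert (Hext : forall j, (forall i, (i < j)%nat -> Qs (seqU j i)) ->
     exists Q, Qs Q /\ forall i, (i < j)%nat -> ~ closeM N M d Q (seqU j i)).
  { intros j Hj. apply NNPP. intros Hno. apply Hneg. exists j, (seqU j). split; auto.
    intros Q HQ. apply NNPP. intros Hc. apply Hno. exists Q. split; auto.
    intros i Hi Hcl. apply Hc. exists i. split; auto. }
  assert (Hu : forall j, Qs (useq j) /\ forall i, (i < j)%nat -> ~ closeM N M d (useq j) (useq i)).
  { intros j. induction j as [j IH] using (well_founded_induction Wf_nat.lt_wf).
    assert (Hj : forall i, (i < j)%nat -> Qs (seqU j i)).
    { intros i Hi. rewrite seqU_eq by auto. apply (IH i Hi). }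
    destruct (epsilon_spec (inhabits Q0) (fun Q => Qs Q /\ forall i, (i < j)%nat -> ~ closeM N M d Q (seqU j i)) (Hext j Hj)) as [H1 H2].
    fold (pick j (seqU j)) in H1, H2. fold (useq j) in H1, H2.
    split; auto. intros i Hi. rewrite <- (seqU_eq j i Hi). auto. }
  destruct (Hcomp useq (fun k => proj1 (Hu k))) as [phi [Ql [Hphi [_ Hcv]]]].
  assert (HK : exists K, forall k, (K <= k)%nat -> forall n, (n < N)%nat -> forall m, (m < M)%nat ->
             Rabs (useq (phi k) n m - Ql n m) < d / 2).
  { apply unifK. intros n Hn. apply unifK. intros m Hm.
    destruct (Hcv n m Hn Hm (d / 2) ltac:(lra)) as [K HK]. exists K. intros k Hk. apply HK. lia. }
  destruct HK as [K HK].
  apply (proj2 (Hu (phi (S K))) (phi K) (Hphi K)).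
  intros n m Hn Hm.
  pose proof (HK K (le_n K) n Hn m Hm). pose proof (HK (S K) ltac:(lia) n Hn m Hm).
  replace (useq (phi (S K)) n m - useq (phi K) n m) with
    ((useq (phi (S K)) n m - Ql n m) - (useq (phi K) n m - Ql n m)) by ring.
  eapply Rle_trans; [apply Rabs_triang|]. rewrite Rabs_Ropp. lra.
Qed.

End Net.

Definition mix k (mu : nat -> R) (F : nat -> nat -> nat -> R) : nat -> nat -> R :=
  fun n m => sumN k (fun i => mu i * F i n m).

Lemma mix_in Qs k mu F : convex_set Qs -> (1 <= k)%nat -> (forall i, (i < k)%nat -> 0 < mu i) ->
  sumN k mu = 1 -> (forall i, (i < k)%nat -> Qs (F i)) -> Qs (mix k mu F).
Proof.
  intros Hc. revert mu. induction k; intros mu Hk Hmu Hs HF. lia.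
  destruct k.
  - simpl in Hs. replace (mix 1 mu F) with (F 0%nat). apply HF; lia.
    apply functional_extensionality; intros n. apply functional_extensionality; intros m.
    unfold mix. simpl. replace (mu 0%nat) with 1 by lra. ring.
  - set (t := sumN (S k) mu).
    assert (Ht : 0 < t) by (apply sumN_pos; [lia| intros; apply Hmu; lia]).
    assert (Hmk : 0 < mu (S k)) by (apply Hmu; lia).
    assert (Es : t + mu (S k) = 1) by (unfold t; simpl in Hs |- *; lra).
    assert (H1 : Qs (mix (S k) (fun i => mu i / t) F)).
    { apply IHk.
      - lia.
      - intros i Hi. apply Rdiv_lt_0_compat; [apply Hmu; lia| exact Ht].
      - unfold Rdiv. rewrite sumN_scal_r. fold t. field. lra.
      - intros i Hi. apply HF. lia. }
    replace (mix (S (S k)) mu F) with (fun n m => t * mix (S k) (fun i => mu i / t) F n m + (1 - t) * F (S k) n m).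
    + apply Hc; [exact H1 | apply HF; lia | lra].
    + apply functional_extensionality; intros n. apply functional_extensionality; intros m.
      unfold mix. replace (1 - t) with (mu (S k)) by lra. rewrite <- sumN_scal.
      change (sumN (S (S k)) (fun i => mu i * F i n m)) with
        (sumN (S k) (fun i => mu i * F i n m) + mu (S k) * F (S k) n m).
      f_equal. apply sumN_ext. intros i Hi. field. lra.
Qed.

Lemma frob_mix N M V k mu F : frob N M V (mix k mu F) = sumN k (fun i => mu i * frob N M V (F i)).
Proof.
  unfold frob, mix.
  transitivity (sumN N (fun n => sumN M (fun m => sumN k (fun i => mu i * (V n m * F i n m))))).
  - apply sumN_ext; intros n Hn. apply sumN_ext; intros m Hm. rewrite <- sumN_scal. apply sumN_ext. intros; ring.
  - transitivity (sumN N (fun n => sumN k (fun i => sumN M (fun m => mu i * (V n m * F i n m))))).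
    + apply sumN_ext; intros n Hn. apply sumN_swap.
    + rewrite sumN_swap. apply sumN_ext. intros i Hi. rewrite <- sumN_scal. apply sumN_ext. intros n Hn.
      rewrite <- sumN_scal. reflexivity.
Qed.

Lemma ln_1m_bound eta : 0 < eta <= 1/2 -> - (2 * eta) <= ln (1 - eta).
Proof.
  intros H. pose proof (ln_le_sub1 (/ (1 - eta)) ltac:(apply Rinv_0_lt_compat; lra)).
  rewrite ln_Rinv in H0 by lra.
  assert (/ (1 - eta) - 1 <= 2 * eta).
  { replace (/ (1 - eta) - 1) with (eta / (1 - eta)) by (field; lra).
    apply Rmult_le_reg_r with (1 - eta). lra. unfold Rdiv. rewrite Rmult_assoc, Rinv_l by lra. nra. }
  lra.
Qed.

Section Strong.
Variables (N M : nat) (Qs : (nat -> nat -> R) -> Prop) (c : R).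
Hypotheses (HN : (1 <= N)%nat) (HM : (1 <= M)%nat) (Hne : exists Q, Qs Q)
  (Hsub : forall Q, Qs Q -> in_simplex_mat N M Q) (Hconv : convex_set Qs)
  (Hcomp : compact_set N M Qs) (Hc : forall v Q, Qs Q -> c <= D_obj N M v Q).

Lemma strong eps : 0 < eps -> exists B p V, KB N M B p V /\ forall Q, Qs Q -> c - eps <= - frob N M V Q.
Proof.
  intros He. destruct Hne as [Q0 HQ0].
  set (eta := Rmin (1/2) (eps / 8)).
  assert (Heta : 0 < eta <= 1/2) by (unfold eta; split; [apply Rmin_glb_lt; lra| apply Rmin_l]).
  assert (Heta2 : eta <= eps / 8) by (unfold eta; apply Rmin_r).
  assert (Hln : - (eps / 4) <= ln (1 - eta)) by (pose proof (ln_1m_bound eta Heta); lra).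
  set (B := Bq M eta).
  assert (HB : 0 < B) by (apply Bq_pos; auto; lra).
  assert (HMp : 0 < INR M) by (apply lt_0_INR; lia).
  set (d := eps / (4 * B * INR M)).
  assert (Hd : 0 < d) by (unfold d; apply Rdiv_lt_0_compat; [lra| apply Rmult_lt_0_compat; lra]).
  destruct (net_exists N M Qs d Q0 Hd Hcomp) as [k [F [HF Hcov]]].
  assert (Hk : (1 <= k)%nat) by (destruct (Hcov Q0 HQ0) as [i [Hi _]]; lia).
  set (good := fun (mu : nat -> R) (pv : (nat -> R) * (nat -> nat -> R)) =>
     KB N M B (fst pv) (snd pv) /\ c - eps / 2 <= - frob N M (snd pv) (mix k mu F)).
  set (sel := fun mu => epsilon (inhabits ((fun _ : nat => 0), (fun _ _ : nat => 0))) (good mu)).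
  assert (Hsel : forall mu, (forall i, (i < k)%nat -> 0 < mu i) -> sumN k mu = 1 -> good mu (sel mu)).
  { intros mu Hmu Hs. unfold sel. apply epsilon_spec.
    assert (Hin : Qs (mix k mu F)) by (apply mix_in; auto).
    destruct (inner N M eta c (eps / 4) (mix k mu F) HN HM ltac:(lra) ltac:(lra) (Hsub _ Hin)
      (fun v => Hc v _ Hin)) as [p [V [HK Hv]]].
    exists (p, V). split; simpl; auto. lra. }
  set (Fo := fun (mu : nat -> R) i => B - frob N M (snd (sel mu)) (F i)).
  assert (HFo : forall w, (forall j, (j < k)%nat -> 0 < w j) -> sumN k w = 1 ->
     forall i, (i < k)%nat -> 0 <= Fo w i <= B + B).
  { intros w Hw Hws i Hi. destruct (Hsel w Hw Hws) as [HK _].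
    pose proof (KB_frob_bound N M B _ _ (F i) HK (Hsub _ (HF i Hi))).
    unfold Fo. unfold Rabs in H. destruct (Rcase_abs _); lra. }
  assert (Hl : 0 <= ln (INR k)) by (rewrite <- ln_1; apply ln_le; [lra| apply (le_INR 1); auto]).
  destruct (choose_gT (ln (INR k)) ((B + B) * (B + B)) (eps / 4) Hl ltac:(nra) ltac:(lra)) as [g [T [Hg [HT Hch]]]].
  assert (HTp : 0 < INR T) by (apply lt_0_INR; lia).
  pose proof (hedge k g (B + B) Fo Hk Hg ltac:(lra) HFo T) as Hh.
  set (W := fun t => wts k g (cumL k g Fo t)).
  assert (HW : forall t, (forall j, (j < k)%nat -> 0 < W t j) /\ sumN k (W t) = 1).
  { intros t. split. intros; apply wts_pos; auto. apply wts_sum; auto. }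
  set (Vt := fun t => snd (sel (W t))).
  set (Pt := fun t => fst (sel (W t))).
  assert (HG : forall t, KB N M B (Pt t) (Vt t) /\ c - eps / 2 <= - frob N M (Vt t) (mix k (W t) F)).
  { intros t. destruct (HW t) as [H1 H2]. apply (Hsel (W t) H1 H2). }
  assert (Hi_bound : forall i, (i < k)%nat ->
     sumN T (fun t => frob N M (Vt t) (F i)) <= INR T * (- (c - eps / 2)) + ln (INR k) / g + INR T * g * ((B + B) * (B + B))).
  { intros i Hi. specialize (Hh i Hi). rewrite cumL_sum in Hh.
    change (sumN T (fun t => sumN k (fun j => W t j * Fo (W t) j)) <= sumN T (fun t => Fo (W t) i) + ln (INR k) / g + INR T * g * ((B + B) * (B + B))) in Hh.
    rewrite (sumN_ext T (fun t => sumN k (fun j => W t j * Fo (W t) j)) (fun t => B - frob N M (Vt t) (mix k (W t) F))) in Hh.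
    - rewrite (sumN_ext T (fun t => Fo (W t) i) (fun t => B - frob N M (Vt t) (F i))) in Hh by (intros; reflexivity).
      rewrite !sumN_minus in Hh.
      assert (sumN T (fun t => - frob N M (Vt t) (mix k (W t) F)) >= sumN T (fun _ => c - eps / 2)).
      { apply Rle_ge. apply sumN_le. intros t Ht. apply HG. }
      rewrite sumN_const in H.
      rewrite (sumN_ext T (fun t => - frob N M (Vt t) (mix k (W t) F)) (fun t => -1 * frob N M (Vt t) (mix k (W t) F))) in H by (intros; ring).
      rewrite sumN_scal in H. lra.
    - intros t Ht. rewrite frob_mix. unfold Fo.
      rewrite (sumN_ext k _ (fun j => B * W t j - W t j * frob N M (Vt t) (F j))) by (intros; unfold Vt; ring).
      rewrite sumN_minus, sumN_scal. destruct (HW t) as [_ Hs]. rewrite Hs. ring. }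
  exists B, (avgp T Pt), (avgV T Vt). split.
  - apply KB_avg; auto. intros t Ht. apply HG.
  - intros Q HQ. destruct (Hcov Q HQ) as [i [Hi Hcl]].
    pose proof (KB_frob_close N M B _ (avgV T Vt) Q (F i) d (KB_avg N M B T Pt Vt HT (fun t _ => proj1 (HG t))) ltac:(lra) Hcl) as Hclose.
    assert (EBd : B * INR M * d = eps / 4) by (unfold d; field; lra).
    rewrite EBd in Hclose.
    rewrite (frob_avg N M T Vt (F i) HT) in Hclose.
    specialize (Hi_bound i Hi).
    assert (ln (INR k) / g + INR T * g * ((B + B) * (B + B)) <= INR T * (eps / 4)).
    { replace (ln (INR k) / g + INR T * g * ((B + B) * (B + B))) with
        (INR T * (ln (INR k) / (g * INR T) + g * ((B + B) * (B + B)))) by (field; lra).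
      apply Rmult_le_compat_l; lra. }
    assert (sumN T (fun t => frob N M (Vt t) (F i)) / INR T <= - (c - eps / 2) + eps / 4).
    { apply Rmult_le_reg_l with (INR T); auto.
      replace (INR T * (sumN T (fun t => frob N M (Vt t) (F i)) / INR T)) with (sumN T (fun t => frob N M (Vt t) (F i))) by (field; lra).
      lra. }
    unfold Rabs in Hclose. destruct (Rcase_abs _); lra.
Qed.

End Strong.

Lemma glb_exists (E : R -> Prop) a : (exists x, E x) -> (forall x, E x -> a <= x) ->
  exists g, is_glb E g /\ a <= g.
Proof.
  intros [x0 Hx0] Ha.
  destruct (completeness (fun y => E (- y))) as [m [Hm1 Hm2]].
  - exists (- a). intros y Hy. specialize (Ha _ Hy). lra.
  - exists (- x0). rewrite Ropp_involutive. auto.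
  - exists (- m). split; [split|].
    + intros y Hy. assert (- y <= m) by (apply Hm1; rewrite Ropp_involutive; auto). lra.
    + intros b Hb. assert (m <= - b). { apply Hm2. intros y Hy. specialize (Hb _ Hy). lra. } lra.
    + assert (m <= - a). { apply Hm2. intros y Hy. specialize (Ha _ Hy). lra. } lra.
Qed.

Lemma lub_exists_le (E : R -> Prop) a : (exists x, E x) -> (forall x, E x -> x <= a) ->
  exists s, is_lub E s /\ s <= a.
Proof.
  intros Hne Ha. destruct (completeness E) as [s Hs].
  - exists a. intros y Hy. auto.
  - auto.
  - exists s. split; auto. apply Hs. intros y Hy. auto.
Qed.

Definition p0 (n : nat) : R := if Nat.eqb n 0 then 1 else 0.

Lemma sum_p0 (f : R -> R) N : (1 <= N)%nat -> f 0 = 0 -> sumN N (fun n => f (p0 n)) = f 1.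
Proof.
  intros HN H0. induction N. lia. destruct N.
  - simpl. unfold p0. simpl. lra.
  - change (sumN (S (S N)) (fun n => f (p0 n))) with (sumN (S N) (fun n => f (p0 n)) + f (p0 (S N))).
    rewrite IHN by lia. unfold p0. simpl. lra.
Qed.

Lemma P0_value N M Qs : (1 <= N)%nat -> (exists Q, Qs Q) -> P_values N M Qs 0.
Proof.
  intros HN [Q0 HQ0]. exists p0, (fun _ => 0), (fun _ _ => 0), 0. split; [|split].
  - split.
    + split. intros n Hn. unfold p0. destruct (Nat.eqb n 0); lra.
      apply (sum_p0 (fun x => x) N HN). auto.
    + intros m Hm. split. intros; lra.
      rewrite (sum_p0 (fun x => persp_term x (0 - 0)) N HN).
      * unfold persp_term. destruct (Rlt_dec 0 1); [|lra]. replace ((0 - 0) / 1) with 0 by field.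
        rewrite exp_0. lra.
      * unfold persp_term. destruct (Rlt_dec 0 0); lra.
  - assert (E : forall Q, frob N M (fun _ _ => 0) Q = 0).
    { intros Q. unfold frob. apply sumN_eq0. intros. apply sumN_eq0. intros. ring. }
    split.
    + intros x [Q [_ ->]]. rewrite E. lra.
    + intros b Hb. apply Hb. exists Q0. split; auto.
  - rewrite sumN_zero. ring.
Qed.

Theorem proposition2 (N M : nat) (Qs : (nat -> nat -> R) -> Prop)
  (HN : (1 <= N)%nat)
  (Hne : exists Q, Qs Q)
  (Hsub : forall Q, Qs Q -> in_simplex_mat N M Q)
  (Hconv : convex_set Qs)
  (Hcomp : compact_set N M Qs) :
  exists c : R,
    is_lub (P_values N M Qs) c /\
    is_glb (D_values N M Qs) c /\
    is_lub (cap_values N M Qs) c.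
Proof.
  pose proof Hne as [Q0 HQ0].
  assert (HM : (1 <= M)%nat).
  { destruct M; [|lia]. exfalso. destruct (Hsub Q0 HQ0 0%nat ltac:(lia)) as [_ H]. simpl in H. lra. }
  assert (PD : forall x y, P_values N M Qs x -> D_values N M Qs y -> x <= y).
  { intros x y [p [lam [V [s [HF [Hs ->]]]]]] [v [Q [HQ ->]]].
    assert (frob N M V Q <= s) by (apply Hs; exists Q; auto).
    pose proof (partA N M p lam V Q HF (Hsub Q HQ)).
    pose proof (W2 N M p Q v HM (proj1 HF) (Hsub Q HQ)). lra. }
  assert (HP0 : P_values N M Qs 0) by (apply P0_value; auto).
  destruct (glb_exists (D_values N M Qs) 0) as [c [Hc _]].
  { exists (D_obj N M (fun _ => 0) Q0). exists (fun _ => 0), Q0. auto. }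
  { intros y Hy. apply PD; auto. }
  assert (HcD : forall v Q, Qs Q -> c <= D_obj N M v Q).
  { intros v Q HQ. apply (proj1 Hc). exists v, Q. auto. }
  assert (PS : forall eps, 0 < eps -> exists x, P_values N M Qs x /\ c - eps <= x).
  { intros eps He. destruct (strong N M Qs c HN HM Hne Hsub Hconv Hcomp HcD eps He) as [B [p [V [HK HV]]]].
    destruct (lub_exists_le (fun x => exists Q, Qs Q /\ x = frob N M V Q) (- (c - eps))) as [s [Hs Hsle]].
    - exists (frob N M V Q0). exists Q0. auto.
    - intros x [Q [HQ ->]]. specialize (HV Q HQ). lra.
    - exists (sumN N (fun _ => 0) - s). split.
      + exists p, (fun _ => 0), V, s. split; [|split]; auto. apply (KB_feasible N M B p V HK).
      + rewrite sumN_zero. lra. }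
  assert (Pc : forall x, P_values N M Qs x -> x <= c).
  { intros x Hx. apply (proj2 Hc). intros y Hy. apply PD; auto. }
  exists c. split; [|split; auto].
  - split. intros x Hx. apply Pc; auto.
    intros b Hb. destruct (Rle_dec c b); auto. exfalso.
    destruct (PS ((c - b) / 2) ltac:(lra)) as [x [Hx Hxc]]. specialize (Hb x Hx). lra.
  - split.
    + intros g [p [Hp [Hg1 Hg2]]]. apply (proj2 Hc). intros y [v [Q [HQ ->]]].
      assert (g <= mutual_info N M p Q) by (apply Hg1; exists Q; auto).
      pose proof (W2 N M p Q v HM Hp (Hsub Q HQ)). lra.
    + intros b Hb. destruct (Rle_dec c b); auto. exfalso.
      destruct (PS ((c - b) / 2) ltac:(lra)) as [x [Hx Hxc]].
      destruct Hx as [p [lam [V [s [HF [Hs Hxe]]]]]].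
      destruct (glb_exists (fun y => exists Q, Qs Q /\ y = mutual_info N M p Q) x) as [g [Hg Hxg]].
      { exists (mutual_info N M p Q0). exists Q0. auto. }
      { intros y [Q [HQ ->]]. assert (frob N M V Q <= s) by (apply Hs; exists Q; auto).
        pose proof (partA N M p lam V Q HF (Hsub Q HQ)). lra. }
      assert (g <= b) by (apply Hb; exists p; split; auto; apply HF). lra.
Qed.
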